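(* Let $b\in\mathbb{R}^n$, $c\in\mathbb{R}^m$, $D\in\mathbb{R}^{m\times n}$ surjective, $K\in\{0,\ldots,m-1\}$, $\gamma>0$, and let $x^*$ be a d-stationary point of $$\min_{x\in\mathbb{R}^n}\ \tfrac12\|b-x\|_2^2+\gamma T_{K,m,1}(Dx-c).$$ Let $\overline{x}$ be any point with $D\overline{x}=c$. If $\gamma>\|b-\overline{x}\|_2/\sigma_{\min}(D)$, then $T_{K,m,1}(Dx^*-c)=0$.
   Context: $T_{K,m,1}(z)$ for $z\in\mathbb{R}^m$ is the sum of the $m-K$ smallest values among $|z_1|,\ldots,|z_m|$. $\sigma_{\min}(D)$ is the smallest nonzero singular value of $D$. A point is d-stationary if the directional derivative of the objective there is $\ge0$ in every direction. *)

(* Defs.v *)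
From HB Require Import structures.
From mathcomp Require Import all_boot all_order all_algebra.
From mathcomp Require Import all_classical all_reals all_analysis.
Set Implicit Arguments. Unset Strict Implicit. Unset Printing Implicit Defensive.
Import Order.TTheory GRing.Theory Num.Theory.
Import numFieldNormedType.Exports.
Local Open Scope classical_set_scope.
Local Open Scope ring_scope.

Definition norm2 {R : realType} {n : nat} (v : 'cV[R]_n) : R :=
  Num.sqrt (\sum_(i < n) v i 0 ^+ 2).

Definition Ttrim {R : realType} {m : nat} (K : nat) (z : 'cV[R]_m) : R :=
  \sum_(a <- take (m - K) (sort <=%R [seq `|z i 0| | i <- enum 'I_m])) a.

Definition sigma_min {R : realType} {m n : nat} (D : 'M[R]_(m, n)) : R :=
  Num.sqrt (inf [set a : R | eigenvalue (D^T *m D) a /\ a != 0]).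

Definition objective {R : realType} {m n : nat} (b : 'cV[R]_n) (c : 'cV[R]_m)
  (D : 'M[R]_(m, n)) (K : nat) (gamma : R) (x : 'cV[R]_n) : R :=
  2^-1 * norm2 (b - x) ^+ 2 + gamma * Ttrim K (D *m x - c).

Definition dstationary {R : realType} {n : nat} (F : 'cV[R]_n -> R)
  (x : 'cV[R]_n) : Prop :=
  forall d : 'cV[R]_n, exists l : R,
    ((fun t : R => (F (x + t *: d) - F x) / t) @ 0^'+ --> l) /\ 0 <= l.

(* Main.v *)
Require Import Defs.
From HB Require Import structures.
From mathcomp Require Import all_boot all_order all_algebra.
From mathcomp Require Import all_classical all_reals all_analysis.
From mathcomp Require Import ring lra.
Import Order.TTheory GRing.Theory Num.Theory.
Import numFieldNormedType.Exports.
Set Implicit Arguments. Unset Strict Implicit.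
Local Open Scope classical_set_scope.
Local Open Scope ring_scope.

Section Aux.
Variable R : realType.

Definition sq {n} (v : 'cV[R]_n) := \sum_(i < n) v i 0 ^+ 2.
Definition dot {n} (u v : 'cV[R]_n) := \sum_(i < n) u i 0 * v i 0.

Lemma sq_ge0 n (v : 'cV[R]_n) : 0 <= sq v.
Proof. by apply: sumr_ge0 => i _; exact: sqr_ge0. Qed.

Lemma norm2_sq n (v : 'cV[R]_n) : norm2 v ^+ 2 = sq v.
Proof. by rewrite /norm2 sqr_sqrtr // sq_ge0. Qed.

Lemma sq_sub n (u v : 'cV[R]_n) (a : R) :
  sq (u - a *: v) = sq u - 2 * a * dot u v + a ^+ 2 * sq v.
Proof.
rewrite /sq /dot !mulr_sumr -sumrB -big_split /=; apply: eq_bigr => i _.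
rewrite !mxE; ring.
Qed.

Lemma lim_affine (f : R -> R) (l a b : R) :
  f @ 0^'+ --> l -> (\forall t \near 0^'+, f t = a + b * t) -> l = a.
Proof.
move=> hl hn.
have h1 : (fun t => a + b * t) @ 0^'+ --> l.
  apply: cvg_trans hl; apply: near_eq_cvg; near=> t; by rewrite (near hn t).
have h2 : (fun t => a + b * t) @ 0^'+ --> a.
  apply: cvg_at_right_filter.
  have := cvgD (cvg_cst a) (cvgM (cvg_cst b) (@cvg_id _ (nbhs (0:R)))).
  rewrite mulr0 addr0; apply; exact: nbhs_filter.
have := cvg_unique _ h1 h2; exact.
Unshelve. all: by end_near.
Qed.


Lemma dir_deriv m n (b : 'cV[R]_n) (c : 'cV[R]_m) (D : 'M[R]_(m, n)) K gamma
  (xs d : 'cV[R]_n) (T0 tau eps : R) :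
  dstationary (objective b c D K gamma) xs -> 0 < eps ->
  (forall t, 0 < t < eps -> Ttrim K (D *m (xs + t *: d) - c) = T0 + t * tau) ->
  Ttrim K (D *m xs - c) = T0 ->
  0 <= - dot (b - xs) d + gamma * tau.
Proof.
move=> hxs he hT hT0.
have [l [hl l0]] := hxs d.
suff <- : l = - dot (b - xs) d + gamma * tau by [].
apply: (@lim_affine _ l _ (2^-1 * sq d) hl).
near=> t.
have ht : 0 < t < eps by apply/andP; split; near: t; [exact: nbhs_right_gt| exact: nbhs_right_lt].
rewrite /objective hT // hT0 !norm2_sq.
have -> : b - (xs + t *: d) = (b - xs) - t *: d by rewrite opprD addrA.
rewrite sq_sub.
have t0 : t != 0 by case/andP: ht => h _; rewrite gt_eqF.
field; exact: t0.
Unshelve. all: by end_near.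
Qed.

End Aux.

Section Trim.
Variable R : realType.

Definition Tf {m} k (f : 'I_m -> R) :=
  \sum_(a <- take k (sort <=%R [seq f i | i <- enum 'I_m])) a.

Lemma Ttrim_Tf m K (z : 'cV[R]_m) : Ttrim K z = Tf (m - K) (fun i => `|z i 0|).
Proof. by []. Qed.

Lemma sorted_mask_sum (s : seq R) (msk : bitseq) : sorted <=%R s ->
  size msk = size s ->
  \sum_(a <- take (count id msk) s) a <= \sum_(a <- mask msk s) a.
Proof.
elim: s msk => [|x s IH] [|bb msk] //= hs.
case=> hsz.
have hs' : sorted <=%R s by apply: path_sorted hs.
case: bb => /=.
  by rewrite !big_cons lerD2l IH.
case hk : (count id msk) => [|k].
  have : size (mask msk s) = 0%N by rewrite size_mask // hk.
  by move/size0nil => ->; rewrite !big_nil.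
apply: le_trans (IH _ hs' hsz); rewrite hk /= big_cons.
have hks : (k < size s)%N by rewrite -hsz; have := count_size id msk; rewrite hk.
rewrite (take_nth 0 hks) -cats1 big_cat /= big_cons big_nil addr0 [x + _]addrC lerD2l.
move: hs; rewrite (path_sortedE le_trans) => /andP[/all_nthP hall _].
exact: hall.
Qed.

Section Idx.
Variables (m : nat) (f : 'I_m -> R).
Definition idx := sort (relpre f <=%R) (enum 'I_m).

Lemma idx_perm : perm_eq idx (index_enum 'I_m).
Proof.
apply: uniq_perm; first by rewrite sort_uniq enum_uniq.
  exact: index_enum_uniq.
by move=> i; rewrite mem_sort mem_enum mem_index_enum.
Qed.

Lemma Tf_idx k : Tf k f = \sum_(i <- take k idx) f i.
Proof. by rewrite /Tf sort_map -map_take big_map. Qed.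

Lemma Tf_le k (S : {set 'I_m}) : #|S| = k -> Tf k f <= \sum_(i in S) f i.
Proof.
move=> hS.
have -> : \sum_(i in S) f i = \sum_(a <- mask [seq i \in S | i <- idx] [seq f i | i <- idx]) a.
  rewrite -map_mask big_map -filter_mask big_filter.
  by apply: perm_big; rewrite perm_sym idx_perm.
have hc : count id [seq i \in S | i <- idx] = k.
  rewrite count_map -hS -sum1_card -sum1_count.
  by apply: perm_big; exact: idx_perm.
rewrite /Tf sort_map -hc; apply: sorted_mask_sum; last by rewrite !size_map.
rewrite sorted_map; apply: sort_sorted => i j; exact: le_total.
Qed.

Lemma Tf_opt k : (k <= m)%N -> exists S : {set 'I_m}, #|S| = k /\ Tf k f = \sum_(i in S) f i.
Proof.
move=> hk.
have hu : uniq (take k idx) by rewrite take_uniq // sort_uniq enum_uniq.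
exists [set i in take k idx]; split.
  rewrite cardsE; move/card_uniqP: hu => ->.
  by rewrite size_take size_sort size_enum_ord; case: ltngtP hk.
rewrite Tf_idx big_uniq //; apply: eq_bigl => i; by rewrite inE.
Qed.

End Idx.

Lemma Tf_ge0 m k (f : 'I_m -> R) : (forall i, 0 <= f i) -> 0 <= Tf k f.
Proof. by move=> h; rewrite Tf_idx; apply: sumr_ge0 => i _. Qed.

Lemma Tf_scale m k (f : 'I_m -> R) a : (k <= m)%N -> 0 <= a ->
  Tf k (fun i => a * f i) = a * Tf k f.
Proof.
move=> hk ha.
have [S [hS eS]] := Tf_opt f hk.
have [S' [hS' eS']] := Tf_opt (fun i => a * f i) hk.
apply/le_anti/andP; split.
  by apply: le_trans (Tf_le _ hS) _; rewrite eS -mulr_sumr.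
rewrite eS' -mulr_sumr; apply: ler_wpM2l => //; exact: Tf_le.
Qed.

Lemma sum_ind m (S : {set 'I_m}) (j : 'I_m) (t : R) : 0 <= t ->
  \sum_(i in S) (if i == j then t else 0) <= t.
Proof.
move=> ht; case: (boolP (j \in S)) => hj.
  rewrite (bigD1 j) //= eqxx big1 ?addr0 // => i /andP[_ /negbTE ->] //.
rewrite big1 // => i hi; case: eqP => // eij; move: hj; by rewrite -eij hi.
Qed.

Lemma Tf_dec m k (f f' : 'I_m -> R) (S : {set 'I_m}) (j : 'I_m) (t : R) :
  (k <= m)%N -> #|S| = k -> Tf k f = \sum_(i in S) f i -> j \in S -> 0 <= t ->
  (forall i, f' i = f i - (if i == j then t else 0)) ->
  Tf k f' = Tf k f - t.
Proof.
move=> hk hS eS hj ht hf.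
have e1 : forall S0 : {set 'I_m}, \sum_(i in S0) f' i =
    \sum_(i in S0) f i - \sum_(i in S0) (if i == j then t else 0).
  by move=> S0; rewrite -sumrB; apply: eq_bigr => i _; rewrite hf.
apply/le_anti/andP; split.
  have e2 : \sum_(i in S) (if i == j then t else 0) = t.
    rewrite (bigD1 j) //= eqxx big1 ?addr0 // => i /andP[_ /negbTE ->] //.
  by apply: le_trans (Tf_le _ hS) _; rewrite e1 eS e2.
have [S' [hS' eS']] := Tf_opt f' hk.
rewrite eS' e1; apply: lerB; first exact: Tf_le.
exact: sum_ind.
Qed.

End Trim.

Section Spec.
Variable R : realType.

Definition bf {m} (B : 'M[R]_m) (u w : 'rV[R]_m) := (u *m B *m w^T) 0 0.

Lemma bf_sum m (B : 'M[R]_m) u w :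
  bf B u w = \sum_(j < m) (\sum_(k < m) u 0 k * B k j) * w 0 j.
Proof. by rewrite /bf !mxE; apply: eq_bigr => j _; rewrite !mxE. Qed.

Lemma bf_cont m (B : 'M[R]_m) : continuous (fun v => bf B v v).
Proof.
have -> : (fun v => bf B v v) =
  (fun v : 'rV[R]_m => \sum_(j < m) (\sum_(k < m) v 0 k * B k j) * v 0 j).
  by rewrite funeqE => v; rewrite bf_sum.
have := (@continuous_big _ _ +%R 0 xpredT add_continuous _ (index_enum 'I_m)
   (fun j (v : 'rV[R]_m) => (\sum_(k < m) v 0 k * B k j) * v 0 j)).
apply; move=> j _ v.
have h1 := (@continuous_big _ _ +%R 0 xpredT add_continuous _ (index_enum 'I_m)
   (fun k (v : 'rV[R]_m) => v 0 k * B k j)).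
apply: (continuousM (s := fun v : 'rV[R]_m => \sum_(k < m) v 0 k * B k j)
   (t := fun v : 'rV[R]_m => v 0 j) (x := v)); last exact: coord_continuous.
apply: h1 => k _ x.
apply: (continuousM (s := fun v : 'rV[R]_m => v 0 k) (t := fun=> B k j) (x := x)).
  exact: coord_continuous.
exact: cst_continuous.
Qed.


Lemma bfZ m (B : 'M[R]_m) a u : bf B (a *: u) (a *: u) = a ^+ 2 * bf B u u.
Proof. by rewrite /bf linearZ /= -!scalemxAl -scalemxAr !mxE; ring. Qed.

Lemma bf1 m (u : 'rV[R]_m) : bf 1%:M u u = \sum_i u 0 i ^+ 2.
Proof. by rewrite /bf mulmx1 mxE; apply: eq_bigr => i _; rewrite mxE. Qed.

Lemma bf1_ge0 m (u : 'rV[R]_m) : 0 <= bf 1%:M u u.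
Proof. by rewrite bf1; apply: sumr_ge0 => i _; exact: sqr_ge0. Qed.

Lemma bf1_eq0 m (u : 'rV[R]_m) : bf 1%:M u u = 0 -> u = 0.
Proof.
rewrite bf1 => /eqP; rewrite psumr_eq0 => [/allP h|i _]; last exact: sqr_ge0.
apply/rowP => i; rewrite mxE; apply/eqP; rewrite -sqrf_eq0.
by apply: h; rewrite mem_index_enum.
Qed.

Lemma bf0 m (B : 'M[R]_m) : bf B 0 0 = 0.
Proof. by rewrite /bf !mul0mx mxE. Qed.

Lemma rayleigh_min m (A : 'M[R]_m) : (0 < m)%N ->
  exists v, bf 1%:M v v = 1 /\ forall w, bf A v v * bf 1%:M w w <= bf A w w.
Proof.
move=> hm.
pose S := [set v : 'rV[R]_m | bf 1%:M v v = 1].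
have S0 : S !=set0.
  exists (delta_mx 0 (Ordinal hm)); rewrite /S /= bf1 (bigD1 (Ordinal hm)) //=.
  rewrite !mxE !eqxx /= big1 ?addr0 ?expr1n // => i /negbTE hi.
  by rewrite mxE hi andbF expr0n.
have cS : compact S.
  have cube := @rV_compact _ m (fun=> `[(-1 : R), 1]%classic)
     (fun=> @segment_compact _ _ _).
  apply: (subclosed_compact _ cube).
    apply: (@preimage_closed _ _ (fun v => bf 1%:M v v) [set 1]).
      by move=> v _; exact: bf_cont.
    exact: closed_eq.
  move=> v; rewrite /S /= => hv i.
  have : v 0 i ^+ 2 <= 1.
    rewrite -hv bf1 (bigD1 i) //= lerDl; apply: sumr_ge0 => k _; exact: sqr_ge0.
  rewrite /= in_itv /= => h; apply/andP; split; nra.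
have [v vS vmin] := compact_EVT_min S0 cS (continuous_subspaceT (@bf_cont m A)).
move: vS; rewrite inE /S /= => vS.
exists v; split => // w.
have [w0|wn0] := eqVneq w 0; first by rewrite w0 !bf0 mulr0.
have hp : 0 < bf 1%:M w w.
  rewrite lt_def bf1_ge0 andbT; apply/negP => /eqP/bf1_eq0 h; by rewrite h eqxx in wn0.
pose r := Num.sqrt (bf 1%:M w w).
have r0 : 0 < r by rewrite sqrtr_gt0.
have hr2 : r ^+ 2 = bf 1%:M w w by rewrite sqr_sqrtr // ltW.
have := vmin (r^-1 *: w); rewrite inE /S /= !bfZ exprVn hr2 mulVf ?gt_eqF // => /(_ erefl) h.
by rewrite -ler_pdivlMr // [_ / _]mulrC.
Qed.


Lemma bf_sym m (B : 'M[R]_m) x y : B^T = B -> bf B y x = bf B x y.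
Proof.
move=> hB; have e (M : 'M[R]_1) : M 0 0 = M^T 0 0 by rewrite mxE.
by rewrite /bf e !trmx_mul trmxK hB mulmxA.
Qed.

Lemma bf_expand m (B : 'M[R]_m) x y t : B^T = B ->
  bf B (x - t *: y) (x - t *: y) = bf B x x - 2 * t * bf B x y + t ^+ 2 * bf B y y.
Proof.
move=> hB.
have -> : bf B (x - t *: y) (x - t *: y) =
   bf B x x - t * bf B y x - t * bf B x y + t ^+ 2 * bf B y y.
  rewrite /bf.
  have -> : (x - t *: y)^T = x^T - t *: y^T by apply/matrixP => i j; rewrite !mxE.
  rewrite !mulmxBl !mulmxBr -!scalemxAl -!scalemxAr !mxE.
  ring.
rewrite (bf_sym _ _ hB); ring.
Qed.

Lemma min_eigen m (A : 'M[R]_m) v : A^T = A -> bf 1%:M v v = 1 ->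
  (forall w, bf A v v * bf 1%:M w w <= bf A w w) -> v *m A = bf A v v *: v.
Proof.
move=> hA hv hmin.
set mu := bf A v v.
pose B := A - mu%:M.
have hB : B^T = B by rewrite /B linearB /= tr_scalar_mx hA.
have hq w : bf B w w = bf A w w - mu * bf 1%:M w w.
  by rewrite /bf /B mulmxBr mulmxBl mul_mx_scalar -!scalemxAl mulmx1 !mxE.
pose u := v *m B.
have hvu : bf B v u = bf 1%:M u u by rewrite /bf mulmx1.
have hQ : 0 <= bf B u u by rewrite hq subr_ge0.
have hF := bf1_ge0 u.
have hq0 : bf B v v = 0 by rewrite hq hv mulr1 subrr.
pose t := bf 1%:M u u / (bf B u u + 1).
have ht : t * (bf B u u + 1) = bf 1%:M u u by rewrite /t divfK // gt_eqF // ltr_wpDl.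
have h0 : 0 <= bf B (v - t *: u) (v - t *: u) by rewrite hq subr_ge0.
rewrite bf_expand // hq0 hvu in h0.
have t0 : 0 <= t by rewrite /t divr_ge0 // addr_ge0.
have hF0 : bf 1%:M u u = 0.
  apply/eqP; rewrite eq_le hF andbT; nra.
have u0 := bf1_eq0 hF0.
apply/eqP; rewrite -subr_eq0 -mul_mx_scalar -mulmxBr; exact/eqP.
Qed.


Lemma bfD m n (D : 'M[R]_(m, n)) (w : 'rV[R]_m) :
  bf (D *m D^T) w w = bf 1%:M (w *m D) (w *m D).
Proof. by rewrite /bf mulmx1 trmx_mul !mulmxA. Qed.

Lemma spectral_D m n (D : 'M[R]_(m, n)) :
  (forall y : 'cV[R]_m, exists x : 'cV[R]_n, D *m x = y) -> (0 < m)%N ->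
  exists mu : R, [/\ 0 < mu, sigma_min D = Num.sqrt mu,
    forall w : 'rV[R]_m, mu * bf 1%:M w w <= bf (D *m D^T) w w &
    D *m D^T \in unitmx].
Proof.
move=> hD hm.
set A := D *m D^T.
have hA : A^T = A by rewrite /A trmx_mul trmxK.
have nondeg (w : 'rV[R]_m) : w *m D = 0 -> w = 0.
  move=> hw; have [x hx] := hD w^T.
  apply: bf1_eq0; rewrite /bf mulmx1 -hx mulmxA hw mul0mx mxE //.
have [v [hv hmin]] := rayleigh_min A hm.
set mu := bf A v v.
have hev := min_eigen hA hv hmin.
have mu0 : 0 < mu.
  rewrite lt_def /mu bfD bf1_ge0 andbT; apply/negP => /eqP /bf1_eq0 /nondeg v0.
  by move: hv; rewrite v0 bf0 => /eqP; rewrite eq_sym oner_eq0.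
pose E := [set a : R | eigenvalue (D^T *m D) a /\ a != 0].
have Emu : E mu.
  split; last by rewrite gt_eqF.
  apply/eigenvalueP; exists (v *m D).
    by rewrite mulmxA -(mulmxA v) -/A hev scalemxAl.
  by apply/eqP => /nondeg v0; move: hv; rewrite v0 bf0 => /eqP; rewrite eq_sym oner_eq0.
have Elb : lbound E mu.
  move=> a [/eigenvalueP [r hr rn0] an0].
  pose w := r *m D^T.
  have hwA : w *m A = a *: w by rewrite /w /A mulmxA -(mulmxA r) hr -scalemxAl.
  have wn0 : w != 0.
    apply/eqP => w0; move: hr; rewrite mulmxA -/w w0 mul0mx => /esym /eqP.
    by rewrite scaler_eq0 (negbTE an0) (negbTE rn0).
  have hw : bf A w w = a * bf 1%:M w w by rewrite /bf hwA -scalemxAl mulmx1 !mxE.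
  have wp : 0 < bf 1%:M w w.
    rewrite lt_def bf1_ge0 andbT; apply/negP => /eqP /bf1_eq0 w0.
    by rewrite w0 eqxx in wn0.
  by move: (hmin w); rewrite hw ler_pM2r.
have infE : inf E = mu.
  apply/le_anti/andP; split.
    by apply: ge_inf => //; exists mu.
  by apply: lb_le_inf => //; exists mu.
exists mu; split => //.
  by rewrite /sigma_min -/E infE.
rewrite -row_free_unit -kermx_eq0; apply: contraT => /rowV0Pn [w /sub_kermxP hw wn0].
have h1 := hmin w.
have h2 : bf A w w = 0 by rewrite /bf hw mul0mx mxE.
have h3 := bf1_ge0 w.
have h4 : bf 1%:M w w = 0 by apply/eqP; rewrite eq_le h3 andbT; by move: h1; rewrite h2 pmulr_rle0.
by move: wn0; rewrite (bf1_eq0 h4) eqxx.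
Qed.


End Spec.

Section MainAux.
Variable R : realType.

Lemma sq_tr n (w : 'rV[R]_n) : sq w^T = bf 1%:M w w.
Proof. by rewrite /sq bf1; apply: eq_bigr => i _; rewrite mxE. Qed.

Lemma dotN n (u v : 'cV[R]_n) : dot u (- v) = - dot u v.
Proof. by rewrite /dot -sumrN; apply: eq_bigr => i _; rewrite mxE mulrN. Qed.

End MainAux.

Unset Implicit Arguments.
Close Scope classical_set_scope.

Theorem mainTheorem9 (R : realType) (m n : nat)
  (b : 'cV[R]_n) (c : 'cV[R]_m) (D : 'M[R]_(m, n))
  (hD : forall y : 'cV[R]_m, exists x : 'cV[R]_n, D *m x = y)
  (K : nat) (hK : (K < m)%N) (gamma : R) (hgamma : 0 < gamma)
  (xs : 'cV[R]_n) (hxs : dstationary (objective b c D K gamma) xs)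
  (xbar : 'cV[R]_n) (hxbar : D *m xbar = c)
  (hgam : norm2 (b - xbar) / sigma_min D < gamma) :
  Ttrim K (D *m xs - c) = 0.
Proof.
set z := D *m xs - c.
set g := b - xs.
set h := b - xbar.
have hm : (0 < m)%N by apply: leq_ltn_trans hK.
have hkm : (m - K <= m)%N by apply: leq_subr.
have T0 : 0 <= Ttrim K z by rewrite Ttrim_Tf; apply: Tf_ge0 => i.
apply/eqP; rewrite eq_le T0 andbT leNgt; apply/negP => Tpos.
pose d1 := xbar - xs.
have hA : 0 <= - dot g d1 + gamma * (- Ttrim K z).
  apply: (dir_deriv (T0 := Ttrim K z) (eps := 1) hxs ltr01) => // t /andP[t0 t1].
  have -> : D *m (xs + t *: d1) - c = (1 - t) *: z.
    rewrite mulmxDr -scalemxAr mulmxBr hxbar /z.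
    apply/matrixP => i j; rewrite !mxE; ring.
  rewrite !Ttrim_Tf.
  have -> : (fun i => `|((1 - t) *: z) i 0|) = (fun i => (1 - t) * `|z i 0|).
    by apply: funext => i; rewrite mxE normrM ger0_norm // subr_ge0 ltW.
  rewrite Tf_scale // ?subr_ge0 ?ltW //; ring.
have hsq : sq g <= sq h.
  have -> : h = g - 1 *: d1 by apply/matrixP => i j; rewrite !mxE; ring.
  rewrite sq_sub expr1n mul1r.
  have := sq_ge0 d1; nra.
have [S [hS eS]] := Tf_opt (fun i => `|z i 0|) hkm.
have [j hjS hj0] : exists2 j, j \in S & z j 0 != 0.
  case: (pselect (exists2 j, j \in S & z j 0 != 0)) => // hn; exfalso.
  move: Tpos; rewrite Ttrim_Tf eS big1 ?ltxx // => i hi.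
  apply/eqP; rewrite normr_eq0; apply/negPn/negP => hz; apply: hn; by exists i.
have [mu [mu0 hsig hmu hunit]] := spectral_D hD hm.
set A := D *m D^T.
have hAT : A^T = A by rewrite /A trmx_mul trmxK.
pose s : R := if 0 < z j 0 then 1 else -1.
have s2 : s ^+ 2 = 1 by rewrite /s; case: ifP => _; rewrite ?sqrrN expr1n.
pose e : 'rV[R]_m := s *: delta_mx 0 j.
pose y := e *m invmx A.
have hyA : y *m A = e by rewrite /y mulmxKV.
pose w := y *m D.
have hDw : D *m w^T = e^T.
  by rewrite /w trmx_mul mulmxA -/A -{1}hAT -trmx_mul hyA.
pose d2 := - w^T.
have hzj : 0 < `|z j 0| by rewrite normr_gt0.
have hB : 0 <= - dot g d2 + gamma * (- 1).
  apply: (dir_deriv (T0 := Ttrim K z) (eps := `|z j 0|) hxs hzj) => // t /andP[t0 t1].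
  rewrite !Ttrim_Tf mulrN1 -/(Tf _ _).
  apply: (Tf_dec (S := S) (j := j)) => //; first exact: ltW.
  move=> i.
  have -> : (D *m (xs + t *: d2) - c) i 0 = z i 0 - t * e 0 i.
    by rewrite mulmxDr -scalemxAr mulmxN hDw /z !mxE; ring.
  have he : e 0 i = if i == j then s else 0.
    by rewrite /e !mxE /=; case: (i == j); rewrite ?mulr1 ?mulr0.
  rewrite he; case: (eqVneq i j) => [eij|hij]; last by rewrite mulr0 !subr0.
  rewrite eij.
  rewrite /s; case: ifP => hz.
    have hzp : 0 <= z j 0 by exact: ltW.
    move: t1; rewrite (ger0_norm hzp) => t1.
    by rewrite mulr1 !ger0_norm // subr_ge0 ltW.
  have hz' : z j 0 < 0 by rewrite lt_def eq_sym hj0 /= leNgt hz.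
  move: t1; rewrite (ltr0_norm hz') => t1.
  rewrite mulrN1 opprK !ltr0_norm //; first ring.
  by rewrite -ltrBrDl sub0r.
have hDg : gamma <= dot g w^T by move: hB; rewrite /d2 dotN opprK; lra.
pose P := s * y 0 j.
have hAy : bf A y y = P.
  by rewrite /bf hyA /e -scalemxAl mxE -rowE mxE mxE.
have hwP : sq w^T = P by rewrite sq_tr /w -bfD -/A hAy.
have hP2 : P ^+ 2 <= bf 1%:M y y.
  rewrite /P exprMn s2 mul1r bf1 (bigD1 j) //= lerDl.
  by apply: sumr_ge0 => i _; exact: sqr_ge0.
have hmuy := hmu y; rewrite -/A hAy in hmuy.
have hmuP : mu * P <= 1 by nra.
have hE := sq_ge0 (g - (gamma * mu) *: w^T).
rewrite sq_sub hwP in hE.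
have e1 : gamma * mu * gamma <= gamma * mu * dot g w^T.
  by apply: ler_wpM2l => //; apply: mulr_ge0; apply: ltW.
have e2 : (gamma * mu) ^+ 2 * P <= gamma ^+ 2 * mu.
  have : gamma ^+ 2 * mu * (mu * P) <= gamma ^+ 2 * mu * 1.
    by apply: ler_wpM2l => //; apply: mulr_ge0 => //; [exact: sqr_ge0 | exact: ltW].
  by rewrite mulr1; congr (_ <= _); ring.
have hg : gamma ^+ 2 * mu <= sq g by nra.
move: hgam; rewrite hsig.
have r0 : 0 < Num.sqrt mu by rewrite sqrtr_gt0.
have r2 : Num.sqrt mu ^+ 2 = mu by rewrite sqr_sqrtr // ltW.
rewrite ltr_pdivrMr // => hN.
have N0 : 0 <= norm2 h by rewrite /norm2 sqrtr_ge0.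
have hh : sq h < gamma ^+ 2 * mu.
  rewrite -norm2_sq -r2; nra.
lra.
Qed.
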